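(* Let $\mathcal{H}$ be an index set, let $S_{\text{def}}$ be a random defining dataset with realization $s$, and for each $h\in\mathcal{H}$ let $\theta_h\in\mathbb{R}$ be an unknown estimand, $\hat\theta_h=\hat\theta_h(s)$ an estimate computed from $S_{\text{def}}$, and $e_h:=\theta_h-\hat\theta_h$ the error. Let $\mathcal{E}(s):=\{(h,\hat\theta_h,\theta_h,e_h):h\in\mathcal{H}\}$, and given $S_{\text{def}}=s$ let $S_{\text{err}}\sim\mathcal{D}$ be an error estimation dataset. Fix $h^*:=\arg\max_{h\in\mathcal{H}}\theta_h\in\mathcal{H}$. Suppose (i) there is a constant $c$ with $c\le\max_{h}\theta_h$, and (ii) there are functions $\hat u(S_{\text{err}},h,\delta)\in\mathbb{R}$ such that for every $\delta\in(0,1)$, $\Pr_{S_{\text{err}}\sim\mathcal{D}}\big(e_{h^*}\le \hat u(S_{\text{err}},h^*,\delta)\,\big|\,\mathcal{E}(s)\big)\ge 1-\delta$. Let $\mathcal{H}_0:=\mathcal{H}$ and define inductively, for $k\ge 0$, $$\hat\xi_k(S_{\text{err}},\delta):=\max_{h\in\mathcal{H}_k(S_{\text{err}})}\hat u(S_{\text{err}},h,\delta),\qquad \mathcal{H}_{k+1}(S_{\text{err}}):=\big\{h\in\mathcal{H} : -\hat\theta_h\le \hat\xi_k(S_{\text{err}},\delta)-c\big\}.$$ Then for any $\delta\in(0,1)$, $$\Pr_{(S_{\text{def}},S_{\text{err}})}\Big(\hat\xi_k(S_{\text{err}},\delta)\ge e_{h^*}\ \ \forall k\in\mathbb{N}\Big)\ge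 1-\delta .$$
   Context: Conditioning on $\mathcal{E}(s)$ means conditioning on the realization $S_{\text{def}}=s$; the distribution $\mathcal{D}$ of $S_{\text{err}}$ may depend on $s$, and $S_{\text{err}}$ is not used to construct the estimates $\hat\theta_h$. Maxima over the classes $\mathcal{H}_k$ are assumed to exist. *)

(* Defs.v *)
From HB Require Import structures.
From mathcomp Require Import all_boot all_order all_algebra.
From mathcomp Require Import all_classical all_reals all_analysis.
Set Implicit Arguments. Unset Strict Implicit. Unset Printing Implicit Defensive.
Import Order.TTheory GRing.Theory Num.Theory.
Local Open Scope classical_set_scope.
Local Open Scope ring_scope.
Local Open Scope ereal_scope.

(* Law of the pair (S_def, S_err) when S_def ~ mu and, given S_def = s,
   S_err ~ D s  (semidirect product mu (x) D):
   P((S_def,S_err) \in A) = \int[mu]_s D s {y | (s,y) \in A}. *)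
Definition joint_prob d d' (X : measurableType d) (Y : measurableType d')
  (R : realType) (mu : probability X R) (D : R.-pker X ~> Y)
  (A : set (X * Y)) : \bar R :=
  \int[mu]_s D s (xsection A s).

(* Maxima are taken as suprema in the extended reals (they coincide with
   the maxima whenever the latter exist). *)
Fixpoint Hset (H Y : Type) (R : realType) (u : Y -> H -> R -> R)
  (thetahat : H -> R) (c delta : R) (y : Y) (k : nat) : set H :=
  match k with
  | 0%N => setT
  | k'.+1 => [set h | (- thetahat h)%:E <=
       ereal_sup [set (u y h' delta)%:E | h' in Hset u thetahat c delta y k']
       - c%:E]
  end.

Definition xi (H Y : Type) (R : realType) (u : Y -> H -> R -> R)
  (thetahat : H -> R) (c delta : R) (y : Y) (k : nat) : \bar R :=
  ereal_sup [set (u y h delta)%:E | h in Hset u thetahat c delta y k].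

(* Main.v *)
Require Import Defs.
From HB Require Import structures.
From mathcomp Require Import all_boot all_order all_algebra.
From mathcomp Require Import all_classical all_reals all_analysis.
From mathcomp Require Import lra.
Import Order.TTheory GRing.Theory Num.Theory.
Local Open Scope classical_set_scope.
Local Open Scope ring_scope.

Theorem corollary2p5
  (R : realType) (d d' : measure_display)
  (X : measurableType d) (Y : measurableType d')
  (mu : probability X R) (D : R.-pker X ~> Y)
  (H : Type) (theta : H -> R) (thetahat : X -> H -> R)
  (hstar : H) (hstar_max : forall h, theta h <= theta hstar)
  (c : R) (hc : c <= theta hstar)
  (u : Y -> H -> R -> R)
  (hu_meas : forall delta, 0 < delta < 1 ->
     measurable_fun setT (fun y => u y hstar delta))
  (hu : forall (s : X) (delta : R), 0 < delta < 1 ->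
     ((1 - delta)%:E <=
       D s [set y | (theta hstar - thetahat s hstar <= u y hstar delta)%R])%E)
  (hevent_meas : forall delta, 0 < delta < 1 ->
     measurable [set sy : X * Y | forall k : nat,
       ((theta hstar - thetahat sy.1 hstar)%:E <=
         xi u (thetahat sy.1) c delta sy.2 k)%E])
  (delta : R) (hdelta : 0 < delta < 1) :
  ((1 - delta)%:E <=
    joint_prob mu D [set sy : X * Y | forall k : nat,
       ((theta hstar - thetahat sy.1 hstar)%:E <=
         xi u (thetahat sy.1) c delta sy.2 k)%E])%E.
Proof.
set A := [set sy : X * Y | _].
have key : forall s, [set y | (theta hstar - thetahat s hstar <= u y hstar delta)%R]
    `<=` xsection A s.
  move=> s y /= hy; rewrite /xsection /= inE /A /=.
  have mem : forall k, Hset u (thetahat s) c delta y k hstar.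
    elim=> [//|k IH] /=.
    have : ((u y hstar delta)%:E <= ereal_sup [set (u y h' delta)%:E | h' in Hset u (thetahat s) c delta y k])%E.
      by apply: ereal_sup_ubound; exists hstar.
    move: (ereal_sup _) => x hx.
    apply: (@le_trans _ _ ((u y hstar delta)%:E - c%:E)%E); last exact: leeB hx (lexx _).
    by rewrite -EFinB lee_fin; move: hy hc => /=; lra.
  move=> k; rewrite /xi.
  apply: (@le_trans _ _ (u y hstar delta)%:E); first by rewrite lee_fin.
  by apply: ereal_sup_ubound; exists hstar.
have mA := hevent_meas delta hdelta.
rewrite /joint_prob.
have -> : ((1 - delta)%:E = \int[mu]_(s in setT) (cst (1 - delta)%:E) s)%E.
  rewrite integral_cst //; rewrite -[LHS]mule1; congr (_ * _)%E; exact: (esym (probability_setT mu)).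
apply: (@ge0_le_integral _ _ _ mu setT measurableT) => //.
- by move=> ? _; rewrite lee_fin; move: hdelta => /andP[_]; lra.
- by apply: measurable_fun_xsection_finite_kernel; rewrite inE.
- move=> s _ /=; apply: (le_trans (hu s delta hdelta)); apply: le_measure => //; rewrite inE //.
    rewrite (_ : [set y | _] = (fun y => u y hstar delta) @^-1` `[(theta hstar - thetahat s hstar)%R, +oo[); last first.
      by apply/seteqP; split => y /=; rewrite in_itv /= andbT.
    by rewrite -[X in measurable X]setTI; apply: (hu_meas delta hdelta).
    exact: measurable_xsection.
Qed.
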